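(* Let $f:\mathbb{R}^{n\times n}\to\mathbb{R}$ be differentiable and suppose there are constants $\underline{\nu}_f\le\overline{\nu}_f$ such that \[ \frac{\underline{\nu}_f}{2}\|Y-X\|_{\mathsf F}^2\le f(Y)-f(X)-\langle\nabla f(X),Y-X\rangle\le\frac{\overline{\nu}_f}{2}\|Y-X\|_{\mathsf F}^2\quad\text{for all }X,Y\in\mathcal{D}_n . \] Let $0<p<1$, $\epsilon\ge 0$, $\overline{\nu}_h=p(1-p)(1+\epsilon)^{p-2}$, and \[ \sigma>\sigma^*_{p,\epsilon}:=\max\Big\{\frac{\overline{\nu}_f}{\overline{\nu}_h},0\Big\}. \] If $X_{\sigma,p,\epsilon}$ is a global minimizer of \[ \min_{X\in\mathcal{D}_n}\ F_{\sigma,p,\epsilon}(X):=f(X)+\sigma\sum_{i,j=1}^n (X_{ij}+\epsilon)^p , \] then $X_{\sigma,p,\epsilon}$ is also a global minimizer of $\min_{X\in\Pi_n} f(X)$.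
   Context: $\Pi_n$ is the set of $n\times n$ permutation matrices and $\mathcal{D}_n=\{X\in\mathbb{R}^{n\times n}: X\mathbf{e}=X^{\mathsf T}\mathbf{e}=\mathbf{e},\ X\ge0\}$ the set of doubly stochastic matrices ($\mathbf{e}$ the all-ones vector). $\langle M,N\rangle=\mathrm{tr}(M^{\mathsf T}N)$ and $\|\cdot\|_{\mathsf F}$ is the Frobenius norm. *)

(* Defs.v *)
From mathcomp Require Import all_boot all_order all_algebra all_fingroup.
From mathcomp Require Import all_classical all_reals all_analysis.
Set Implicit Arguments. Unset Strict Implicit. Unset Printing Implicit Defensive.
Import Order.TTheory GRing.Theory Num.Theory.
Local Open Scope ring_scope.

Definition frob_inner (R : numDomainType) (n : nat) (M N : 'M[R]_n) : R :=
  \tr (M^T *m N).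

Definition frob_norm2 (R : numDomainType) (n : nat) (M : 'M[R]_n) : R :=
  frob_inner M M.

Definition doubly_stochastic (R : numDomainType) (n : nat) (X : 'M[R]_n) : Prop :=
  (forall i j, 0 <= X i j) /\
  (forall i, \sum_j X i j = 1) /\
  (forall j, \sum_i X i j = 1).

Definition perm_matrix (R : numDomainType) (n : nat) (X : 'M[R]_n) : Prop :=
  is_perm_mx X.

Definition F_pen (R : realType) (n : nat) (f : 'M[R]_n -> R) (sigma p eps : R)
  (X : 'M[R]_n) : R :=
  f X + sigma * \sum_i \sum_j powR (X i j + eps) p.

(* Main.v *)
Require Import Defs.
From mathcomp Require Import all_boot all_order all_algebra all_fingroup.
From mathcomp Require Import all_classical all_reals all_analysis.
From mathcomp Require Import ring lra zify.
Set Implicit Arguments. Unset Strict Implicit. Unset Printing Implicit Defensive.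
Import Order.TTheory GRing.Theory Num.Theory.
Local Open Scope ring_scope.

Lemma fn2E (R : realType) n (M : 'M[R]_n) : frob_norm2 M = \sum_i \sum_j M i j ^+ 2.
Proof.
rewrite /frob_norm2 /frob_inner /mxtrace exchange_big /=; apply: eq_bigr => j _.
rewrite !mxE; apply: eq_bigr => i _; by rewrite mxE expr2.
Qed.

Lemma fiN (R : realType) n (G V : 'M[R]_n) : frob_inner G (- V) = - frob_inner G V.
Proof. by rewrite /frob_inner mulmxN raddfN. Qed.

Lemma fn2N (R : realType) n (V : 'M[R]_n) : frob_norm2 (- V) = frob_norm2 V.
Proof. by rewrite !fn2E; apply: eq_bigr => i _; apply: eq_bigr => j _; rewrite mxE sqrrN. Qed.

Lemma fn2Z (R : realType) n (t : R) (V : 'M[R]_n) :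
  frob_norm2 (t *: V) = t ^+ 2 * \sum_i \sum_j V i j ^+ 2.
Proof.
rewrite fn2E mulr_sumr; apply: eq_bigr => i _; rewrite mulr_sumr; apply: eq_bigr => j _.
by rewrite mxE exprMn.
Qed.

Lemma perm_entry (R : realType) n (s : 'S_n) i j :
  (perm_mx s : 'M[R]_n) i j = (s i == j)%:R.
Proof. by rewrite !mxE. Qed.

Lemma rowc (R : realType) n (G : R -> R) (k : 'I_n) :
  \sum_j G ((k == j)%:R) = G 1 + G 0 *+ n.-1.
Proof.
rewrite (bigD1 k) //= eqxx; congr (_ + _).
rewrite (eq_bigr (fun=> G 0)); last by move=> j jk; rewrite eq_sym (negbTE jk).
by rewrite sumr_const cardC1 card_ord.
Qed.

Lemma perm_ds (R : realType) n (s : 'S_n) : doubly_stochastic (perm_mx s : 'M[R]_n).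
Proof.
have rs : forall (s : 'S_n) i, \sum_j (perm_mx s : 'M[R]_n) i j = 1.
  move=> s' i; under eq_bigr do rewrite perm_entry.
  by rewrite (rowc id) mul0rn addr0.
split; [|split] => //.
  by move=> i j; rewrite perm_entry ler0n.
move=> j; rewrite -(rs s^-1%g j); apply: eq_bigr => i _.
by rewrite -tr_perm_mx [RHS]mxE.
Qed.

Lemma perm_h (R : realType) n (G : R -> R) (s1 s2 : 'S_n) :
  \sum_i \sum_j G ((perm_mx s1 : 'M[R]_n) i j) = \sum_i \sum_j G ((perm_mx s2 : 'M[R]_n) i j).
Proof.
apply: eq_bigr => i _.
under eq_bigr do rewrite perm_entry.
under [RHS]eq_bigr do rewrite perm_entry.
by rewrite !rowc.
Qed.

Lemma card2_imset (T I : finType) (S : {set T}) (f : T -> I) :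
  (forall x, x \in S -> exists2 y, y \in S & (y != x) && (f y == f x)) ->
  (2 * #|f @: S| <= #|S|)%N.
Proof.
move=> H.
rewrite -[#|S|]sum1_card (partition_big f (mem (f @: S))) /=; last first.
  by move=> x xS; apply: imset_f.
rewrite mulnC -sum_nat_const; apply: leq_sum => i /imsetP[x0 x0S ->].
have [y yS /andP[yx fy]] := H x0 x0S.
rewrite sum1_card.
have <- : #|[set x0; y]%SET| = 2%N by rewrite cards2 eq_sym yx.
apply: subset_leq_card; apply/fintype.subsetP => z; rewrite !inE.
by case/orP => /eqP ->; rewrite unfold_in /= ?x0S ?yS ?eqxx ?fy.
Qed.

Lemma ds_le1 (R : realType) n (X : 'M[R]_n) i j : doubly_stochastic X -> X i j <= 1.
Proof.
move=> [H0 [Hr _]]; rewrite -(Hr i) (bigD1 j) //= lerDl.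
by apply: sumr_ge0 => k _.
Qed.

Lemma ds_tr (R : realType) n (X : 'M[R]_n) : doubly_stochastic X -> doubly_stochastic X^T.
Proof.
move=> [H0 [Hr Hc]]; split; [|split] => *; rewrite ?mxE //.
  by under eq_bigr do rewrite mxE.
by under eq_bigr do rewrite mxE.
Qed.

Lemma frac_row (R : realType) n (X : 'M[R]_n) i j : doubly_stochastic X ->
  0 < X i j < 1 -> exists2 j', j' != j & 0 < X i j' < 1.
Proof.
move=> DS; have [H0 [Hr _]] := DS; move=> /andP[x0 x1].
case: (boolP [exists j', (j' != j) && ((0 < X i j') && (X i j' < 1))]).
  by case/existsP => j' /andP[? ?]; exists j'.
move/existsPn => H.
have E := Hr i; rewrite (bigD1 j) //= in E.
case: (boolP [exists k, (k != j) && (X i k == 1)]).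
  case/existsP => k /andP[kj /eqP Xk].
  have : X i k <= \sum_(l | l != j) X i l.
    rewrite (bigD1 k) //= lerDl; apply: sumr_ge0 => *; exact: H0.
  rewrite Xk; lra.
move/existsPn => H'.
have : \sum_(l | l != j) X i l = 0.
  apply: big1 => k kj.
  have := H k; rewrite kj /= => /negP Hk.
  have := H' k; rewrite kj /= => /eqP Hk1.
  have := H0 i k; have := ds_le1 i k DS => a b.
  case: (ltrP 0 (X i k)) => c; last by apply/eqP; rewrite eq_le c b.
  exfalso; apply: Hk; rewrite c /= lt_neqAle a andbT; exact/eqP.
lra.
Qed.

Lemma pair2 (R : realType) n (X : 'M[R]_n) i j j' : doubly_stochastic X ->
  j != j' -> X i j + X i j' <= 1.
Proof.
move=> [H0 [Hr _]] jj; rewrite -(Hr i) (bigD1 j) //= lerD2l.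
rewrite (bigD1 j') /=; last by rewrite eq_sym.
rewrite lerDl; apply: sumr_ge0 => *; exact: H0.
Qed.

Lemma nofrac_perm (R : realType) n (X : 'M[R]_n) : doubly_stochastic X ->
  (forall i j, ~~ (0 < X i j < 1)) -> is_perm_mx X.
Proof.
move=> DS Hf; have [H0 [Hr Hc]] := DS.
have H01 : forall i j, X i j = 0 \/ X i j = 1.
  move=> i j; have := Hf i j; have := H0 i j; have := ds_le1 i j DS.
  rewrite le_eqVlt => /orP[/eqP->|a]; first by right.
  rewrite le_eqVlt => /orP[/eqP<-|b]; first by left.
  by rewrite a b.
pose s0 i := odflt i [pick j | X i j == 1].
have s0P : forall i, X i (s0 i) = 1.
  move=> i; rewrite /s0; case: pickP => [j /eqP //|H].
  exfalso; have : \sum_j X i j = 0.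
    apply: big1 => j _; case: (H01 i j) => // E.
    by have := H j; rewrite E eqxx.
  by rewrite Hr; apply/eqP; rewrite oner_eq0.
have uniq1 : forall i j, X i j = 1 -> j = s0 i.
  move=> i j E; apply/eqP; apply/negPn/negP => jn.
  by have := pair2 i DS jn; rewrite E s0P; lra.
have s0inj : injective s0.
  move=> i1 i2 E; apply/eqP; apply/negPn/negP => ii.
  have := pair2 (s0 i1) (ds_tr DS) ii; rewrite !mxE s0P E s0P; lra.
apply/is_perm_mxP; exists (perm s0inj); apply/matrixP => i j.
rewrite perm_entry permE; case: eqVneq => [<-|ne]; first by rewrite s0P.
case: (H01 i j) => // /uniq1 E; by rewrite E eqxx in ne.
Qed.

Lemma exists_dir (R : realType) n (X : 'M[R]_n) : doubly_stochastic X ->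
  ~~ is_perm_mx X ->
  exists D : 'M[R]_n, [/\ D != 0, (forall i j, D i j != 0 -> 0 < X i j < 1),
    (forall i, \sum_j D i j = 0) & (forall j, \sum_i D i j = 0)].
Proof.
move=> DS nP.
pose S := [set ij : 'I_n * 'I_n | 0 < X ij.1 ij.2 < 1].
have [ij0 ij0S] : exists ij, ij \in S.
  case: (pickP (mem S)) => [ij H|H]; first by exists ij.
  exfalso; move/negP: nP; apply; apply: nofrac_perm DS _ => i j.
  by move: (H (i, j)); rewrite -[mem S (i, j)]/((i, j) \in S) /S inE /= => ->.
pose Rw := (fst @: S)%SET; pose Cl := (snd @: S)%SET.
pose j0 := ij0.2; pose C' := (Cl :\ j0)%SET.
have SE : forall i j, ((i, j) \in S) = (0 < X i j < 1) by move=> i j; rewrite /S inE.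
have cR : (2 * #|Rw| <= #|S|)%N.
  apply: card2_imset => -[i j]; rewrite SE => Hij.
  have [j' jj Hj'] := frac_row DS Hij.
  by exists (i, j'); rewrite ?SE //= xpair_eqE eqxx /= (negbTE jj).
have cC : (2 * #|Cl| <= #|S|)%N.
  apply: card2_imset => -[i j]; rewrite SE => Hij.
  have Hij' : 0 < X^T j i < 1 by rewrite mxE.
  have [i' ii Hi'] := frac_row (ds_tr DS) Hij'.
  by exists (i', j); [rewrite SE; move: Hi'; rewrite mxE | rewrite /= xpair_eqE !eqxx (negbTE ii)].
have j0C : j0 \in Cl by apply: imset_f.
have cC' : #|C'| = (#|Cl| - 1)%N by rewrite (cardsD1 j0 Cl) j0C /= add1n subn1.
have C1 : (0 < #|Cl|)%N by apply/card_gt0P; exists j0.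
have klt : (#|Rw| + #|C'| < #|S|)%N.
  rewrite cC'; move: cR cC C1; clear; lia.
pose e := fun k : 'I_#|S| => (enum_val k : 'I_n * 'I_n).
have eS : forall k, e k \in S by move=> k; exact: enum_valP.
have einj : injective e by exact: enum_val_inj.
pose B1 : 'M[R]_(#|S|, #|Rw|) := \matrix_(k, r) ((e k).1 == enum_val r)%:R.
pose B2 : 'M[R]_(#|S|, #|C'|) := \matrix_(k, c) ((e k).2 == enum_val c)%:R.
pose B := row_mx B1 B2.
have rk : \rank (kermx B) != 0%N.
  rewrite mxrank_ker; have := rank_leq_col B; move: klt; clear; lia.
rewrite mxrank_eq0 in rk.
have [k0 Hk0] : exists k, row k (kermx B) != 0.
  case: (pickP (fun k => row k (kermx B) != 0)) => [k Hk|H]; first by exists k.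
  exfalso; move/negP: rk; apply; apply/eqP/row_matrixP => k.
  by have := H k; rewrite row0 /= => /negbFE/eqP.
pose w := row k0 (kermx B).
have wB : w *m B = 0 by rewrite -row_mul mulmx_ker row0.
rewrite mul_mx_row in wB; move/eqP: wB; rewrite row_mx_eq0 => /andP[/eqP w1 /eqP w2].
pose D : 'M[R]_n := \matrix_(i, j) \sum_k w 0 k * ((e k == (i, j))%:R).
have rowD i : \sum_j D i j = \sum_k w 0 k * ((e k).1 == i)%:R.
  under eq_bigr do rewrite mxE.
  rewrite exchange_big; apply: eq_bigr => k _; rewrite -mulr_sumr; congr (_ * _).
  case: (e k) => a b /=; rewrite (bigD1 b) //= big1 ?addr0 => [|j jb].
    by rewrite xpair_eqE eqxx andbT.
  by rewrite xpair_eqE [b == _]eq_sym (negbTE jb) andbF.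
have colD j : \sum_i D i j = \sum_k w 0 k * ((e k).2 == j)%:R.
  under eq_bigr do rewrite mxE.
  rewrite exchange_big; apply: eq_bigr => k _; rewrite -mulr_sumr; congr (_ * _).
  case: (e k) => a b /=; rewrite (bigD1 a) //= big1 ?addr0 => [|i ia].
    by rewrite xpair_eqE eqxx.
  by rewrite xpair_eqE [a == _]eq_sym (negbTE ia).
have rowz i : \sum_j D i j = 0.
  rewrite rowD; case: (boolP (i \in Rw)) => iR.
    have := congr1 (fun M : 'rV[R]_#|Rw| => M 0 (enum_rank_in iR i)) w1.
    rewrite !mxE => E; rewrite -[RHS]E; apply: eq_bigr => k _.
    by rewrite /w /B1 !mxE (enum_rankK_in iR iR).
  apply: big1 => k _; have : (e k).1 \in Rw by apply: imset_f.
  by case: eqP => [->|]; rewrite ?mulr0 // (negbTE iR).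
have colz' j : j != j0 -> \sum_k w 0 k * ((e k).2 == j)%:R = 0.
  move=> jj0; case: (boolP (j \in C')) => jC.
    have := congr1 (fun M : 'rV[R]_#|C'| => M 0 (enum_rank_in jC j)) w2.
    rewrite !mxE => E; rewrite -[RHS]E; apply: eq_bigr => k _.
    by rewrite /w /B2 !mxE (enum_rankK_in jC jC).
  apply: big1 => k _; have : (e k).2 \in Cl by apply: imset_f.
  case: eqP => [E|]; rewrite ?mulr0 // E => jCl.
  by move: jC; rewrite /C' in_setD1 jj0 jCl.
have colz j : \sum_i D i j = 0.
  rewrite colD; case: (eqVneq j j0) => [->|]; last exact: colz'.
  have : \sum_i \sum_j D i j = 0 by apply: big1 => i _; exact: rowz.
  rewrite exchange_big (bigD1 j0) //= colD => E; rewrite -[RHS]E [X in _ + X]big1 ?addr0 // => j1 jj.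
  by rewrite colD colz'.
exists D; split => //.
- have [k Hk] : exists k, w 0 k != 0.
    case: (pickP (fun k => w 0 k != 0)) => [k H|H]; first by exists k.
    exfalso; move/negP: Hk0; apply; apply/eqP/matrixP => a b.
    by rewrite ord1 [RHS]mxE; have := H b => /negbFE/eqP.
  have De : D (e k).1 (e k).2 = w 0 k.
    rewrite [LHS]mxE -surjective_pairing (bigD1 k) //= eqxx mulr1 big1 ?addr0 // => k' kk.
    by rewrite (inj_eq einj) (negbTE kk) mulr0.
  apply/negP => /eqP D0; move/negP: Hk; apply.
  by rewrite -De D0 mxE.
- move=> i j; apply: contraR => nS; rewrite mxE big1 // => k _.
  case: eqP => [E|]; rewrite ?mulr0 //.
  by move: (eS k); rewrite E SE (negbTE nS).
Qed.

Section Conc.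
Local Open Scope classical_set_scope.
Local Open Scope ring_scope.
Variables (R : realType) (p M : R).
Hypotheses (p0 : 0 < p) (p1 : p < 1) (M0 : 0 < M).
Let nu := p * (1 - p) * M `^ (p - 2).
Let L (z : R) := p * z `^ (p - 1) + nu * z.
Let K (z : R) := z `^ p + nu / 2 * (z * z).

Lemma dL (z : R) : 0 < z -> is_derive z 1 L (p * ((p - 1) * z `^ (p - 2)) + nu).
Proof.
move=> z0.
have -> : p - 2 = p - 1 - 1 by ring.
rewrite /L; apply: is_deriveD.
 apply: is_deriveZ. exact: is_derive1_powR.
have H := is_deriveZ nu (is_derive_id z (1:R)).
have E : nu \*: (@id R) = *%R nu by apply/funext => y /=.
rewrite E in H; exact: is_derive_eq H (mulr1 nu).
Qed.



Lemma dK (z : R) : 0 < z -> is_derive z 1 K (L z).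
Proof.
move=> z0; rewrite /K /L; apply: is_deriveD.
  exact: is_derive1_powR.
have H := is_deriveZ (nu / 2) (is_deriveM (is_derive_id z (1:R)) (is_derive_id z (1:R))).
have E : (nu / 2) \*: ((@id R) * (@id R)) = (fun z => nu / 2 * (z * z)) by apply/funext => y /=.
rewrite E in H; apply: is_derive_eq H _.
by rewrite /GRing.scale /=; field.
Qed.

Lemma contK a b : 0 < a -> {within `[a, b], continuous K}.
Proof.
move=> a0; apply: derivable_within_continuous => x; rewrite in_itv /= => /andP[ax _].
have : 0 < x by apply: lt_le_trans ax.
by move=> /dK [].
Qed.

Lemma contL a b : 0 < a -> {within `[a, b], continuous L}.
Proof.
move=> a0; apply: derivable_within_continuous => x; rewrite in_itv /= => /andP[ax _].
have : 0 < x by apply: lt_le_trans ax.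
by move=> /dL [].
Qed.

Lemma Lmon (y1 y2 : R) : 0 < y1 -> y1 <= y2 -> y2 <= M -> L y2 <= L y1.
Proof.
move=> y10 y12 y2M.
have h0 := p0; have h1 := p1; have hM := M0.
have dL' : forall x, x \in `]y1, y2[ -> is_derive x 1 L (p * ((p - 1) * x `^ (p - 2)) + nu).
  move=> x; rewrite in_itv /= => /andP[x1 _]; apply: dL; exact: lt_trans x1.
have [c cI E] := MVT_segment y12 dL' (@contL y1 y2 y10).
move: cI; rewrite in_itv /= => /andP[c1 c2].
have c0 : 0 < c by apply: lt_le_trans c1.
rewrite -subr_le0 E; apply: mulr_le0_ge0; last by rewrite subr_ge0.
have cM : c `^ (p - 2) >= M `^ (p - 2).
  have -> : p - 2 = - (2 - p) by ring.
  rewrite !powRN lef_pV2 ?posrE ?powR_gt0 //.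
  have h2p : 0 <= 2 - p :> R by lra.
  apply: (ge0_ler_powR h2p); rewrite ?nnegrE; last exact: le_trans c2 y2M.
  exact: ltW. exact: ltW.
have H : 0 <= p * (1 - p) * (c `^ (p - 2) - M `^ (p - 2)).
  by rewrite !mulr_ge0 // ?subr_ge0 //; lra.
rewrite /nu. lra.
Qed.


Lemma conc0 (x s : R) : 0 <= s -> 0 < x - s -> x + s <= M ->
  (x + s) `^ p + (x - s) `^ p - 2 * x `^ p <= - nu * s ^+ 2.
Proof.
move=> s0 xs0 xsM.
have h0 := p0; have h1 := p1; have hM := M0.
have dK' : forall a b : R, 0 < a -> forall y, y \in `]a, b[ -> is_derive y 1 K (L y).
  move=> a b a0 y; rewrite in_itv /= => /andP[ay _]; apply: dK; exact: lt_trans ay.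
have l1 : x - s <= x by lra.
have l2 : x <= x + s by lra.
have [c1 c1I E1] := MVT_segment l1 (dK' _ _ xs0) (@contK _ _ xs0).
have x0 : 0 < x by lra.
have [c2 c2I E2] := MVT_segment l2 (dK' _ _ x0) (@contK _ _ x0).
move: c1I c2I; rewrite !in_itv /= => /andP[c11 c12] /andP[c21 c22].
have Lc : L c2 <= L c1.
  apply: Lmon; [lra|lra|lra].
have : L c2 * s <= L c1 * s by apply: ler_wpM2r.
have e1 : x - (x - s) = s by ring.
have e2 : x + s - x = s by ring.
rewrite e1 in E1; rewrite e2 in E2.
rewrite -E1 -E2 /K; move: ((x + s) `^ p) ((x - s) `^ p) (x `^ p) => A B C.
move=> H. rewrite expr2. nra.
Qed.

Lemma conc (x s : R) : 0 < x - s -> 0 < x + s -> x + s <= M -> x - s <= M ->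
  (x + s) `^ p + (x - s) `^ p - 2 * x `^ p <= - nu * s ^+ 2.
Proof.
move=> h1 h2 h3 h4; have [s0|s0] := leP 0 s; first exact: conc0.
have := @conc0 x (- s); rewrite sqrrN opprK => H.
rewrite [(x + s) `^ p + _]addrC; apply: H h2 h4; rewrite oppr_ge0; exact: ltW.
Qed.
End Conc.


Unset Implicit Arguments.
Set Strict Implicit.

Theorem theorem3p2 (R : realType) (n : nat) (f : 'M[R]_n -> R)
  (gradf : 'M[R]_n -> 'M[R]_n) (nu_lo nu_hi p eps sigma : R)
  (Xs : 'M[R]_n) :
  (forall X, differentiable f X) ->
  (forall X V, 'd f X V = frob_inner (gradf X) V) ->
  nu_lo <= nu_hi ->
  (forall X Y, doubly_stochastic X -> doubly_stochastic Y ->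
     nu_lo / 2 * frob_norm2 (Y - X)
       <= f Y - f X - frob_inner (gradf X) (Y - X)
     /\ f Y - f X - frob_inner (gradf X) (Y - X)
       <= nu_hi / 2 * frob_norm2 (Y - X)) ->
  0 < p -> p < 1 -> 0 <= eps ->
  Num.max (nu_hi / (p * (1 - p) * powR (1 + eps) (p - 2))) 0 < sigma ->
  doubly_stochastic Xs ->
  (forall X, doubly_stochastic X -> F_pen f sigma p eps Xs <= F_pen f sigma p eps X) ->
  perm_matrix Xs /\ (forall P, perm_matrix P -> f Xs <= f P).
Proof.
move=> _ _ _ Hf p0 p1 e0 Hs DSX Hmin.
set nu := p * (1 - p) * powR (1 + eps) (p - 2) in Hs.
have M0 : 0 < 1 + eps by lra.
have nu0 : 0 < nu by rewrite /nu !mulr_gt0 ?powR_gt0 //; lra.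
move: Hs; rewrite gt_max => /andP[Hs1 s0].
rewrite ltr_pdivrMr // in Hs1.
have Pperm : is_perm_mx Xs.
  case: (boolP (is_perm_mx Xs)) => // nP; exfalso.
  have [D [Dn0 Dsupp Drow Dcol]] := exists_dir DSX nP.
  pose a i j := if D i j != 0 then Num.min (Xs i j) (1 - Xs i j) / `|D i j| else 1.
  have a0 : forall i j, 0 < a i j.
    move=> i j; rewrite /a; case: ifP => // Dn; have /andP[x0 x1] := Dsupp _ _ Dn.
    by rewrite divr_gt0 ?normr_gt0 // lt_min x0 subr_gt0.
  pose mm := \big[Num.min/1]_(ij : 'I_n * 'I_n) a ij.1 ij.2.
  have mm0 : 0 < mm.
    rewrite /mm; apply: (big_ind (fun x : R => 0 < x)) => //.
    by move=> x y hx hy; rewrite lt_min hx hy.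
  have mma : forall i j, mm <= a i j.
    by move=> i j; rewrite /mm (bigD1 (i, j)) //= ge_min lexx.
  pose t := mm / 2.
  have t0 : 0 < t by rewrite divr_gt0.
  have key : forall i j, D i j != 0 -> [/\ 0 < Xs i j - t * D i j,
      0 < Xs i j + t * D i j, Xs i j + t * D i j < 1 & Xs i j - t * D i j < 1].
    move=> i j Dn; have := mma i j; rewrite /a Dn => H.
    have Dp : 0 < `|D i j| by rewrite normr_gt0.
    have tl : t * `|D i j| < Num.min (Xs i j) (1 - Xs i j).
      rewrite -ltr_pdivlMr //; apply: lt_le_trans H; rewrite /t; lra.
    move: tl; rewrite lt_min => /andP[u v].
    have w1 : t * D i j <= t * `|D i j| by rewrite ler_pM2l // ler_norm.
    have w2 : - (t * D i j) <= t * `|D i j|.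
      by rewrite -mulrN ler_pM2l // -normrN ler_norm.
    split; lra.
  pose Yp := Xs + t *: D; pose Ym := Xs - t *: D.
  have Ype : forall i j, Yp i j = Xs i j + t * D i j by move=> i j; rewrite !mxE.
  have Yme : forall i j, Ym i j = Xs i j - t * D i j by move=> i j; rewrite !mxE.
  have [X0 [Xr Xc]] := DSX.
  have DSp : doubly_stochastic Yp.
    split; [|split].
    - move=> i j; rewrite Ype; case: (eqVneq (D i j) 0) => [->|Dn].
        by rewrite mulr0 addr0.
      by case: (key _ _ Dn) => _ h _ _; exact: ltW.
    - move=> i; under eq_bigr do rewrite Ype.
      by rewrite big_split /= -mulr_sumr Xr Drow mulr0 addr0.
    - move=> j; under eq_bigr do rewrite Ype.
      by rewrite big_split /= -mulr_sumr Xc Dcol mulr0 addr0.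
  have DSm : doubly_stochastic Ym.
    split; [|split].
    - move=> i j; rewrite Yme; case: (eqVneq (D i j) 0) => [->|Dn].
        by rewrite mulr0 subr0.
      by case: (key _ _ Dn) => h _ _ _; exact: ltW.
    - move=> i; under eq_bigr do rewrite Yme.
      by rewrite sumrB -mulr_sumr Xr Drow mulr0 subr0.
    - move=> j; under eq_bigr do rewrite Yme.
      by rewrite sumrB -mulr_sumr Xc Dcol mulr0 subr0.
  pose SD := \sum_i \sum_j D i j ^+ 2.
  have SD0 : 0 < SD.
    have [i [j Dn]] : exists i j, D i j != 0.
      case: (pickP (fun ij : 'I_n * 'I_n => D ij.1 ij.2 != 0)) => [[i j] H|H].
        by exists i, j.
      exfalso; move/negP: Dn0; apply; apply/eqP/matrixP => i j.
      by have := H (i, j); rewrite mxE /= => /negbFE/eqP.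
    have q0 : 0 < D i j ^+ 2 by rewrite lt0r sqrf_eq0 Dn sqr_ge0.
    have r1 : 0 <= \sum_(k | k != j) D i k ^+ 2 by apply: sumr_ge0 => *; exact: sqr_ge0.
    have r2 : 0 <= \sum_(k | k != i) \sum_l D k l ^+ 2.
      by apply: sumr_ge0 => *; apply: sumr_ge0 => *; exact: sqr_ge0.
    rewrite /SD (bigD1 i) //= (bigD1 j) //=; lra.
  have [_ Hp] := Hf Xs Yp DSX DSp.
  have [_ Hm] := Hf Xs Ym DSX DSm.
  have E1 : Yp - Xs = t *: D by rewrite /Yp addrAC subrr add0r.
  have E2 : Ym - Xs = - (t *: D) by rewrite /Ym addrAC subrr add0r.
  rewrite E1 in Hp; rewrite E2 in Hm.
  rewrite fiN fn2N fn2Z -/SD in Hm; rewrite fn2Z -/SD in Hp.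
  pose hX (Y : 'M[R]_n) := \sum_i \sum_j powR (Y i j + eps) p.
  have M1 : f Xs + sigma * hX Xs <= f Yp + sigma * hX Yp := Hmin Yp DSp.
  have M2 : f Xs + sigma * hX Xs <= f Ym + sigma * hX Ym := Hmin Ym DSm.
  have hE : hX Yp + hX Ym - 2 * hX Xs = \sum_i \sum_j
      (powR (Yp i j + eps) p + powR (Ym i j + eps) p - 2 * powR (Xs i j + eps) p).
    rewrite /hX mulr_sumr -big_split -sumrB; apply: eq_bigr => i _.
    by rewrite mulr_sumr -big_split -sumrB.
  have HSD : \sum_i \sum_j (- nu * t ^+ 2 * D i j ^+ 2) = - nu * t ^+ 2 * SD.
    by rewrite /SD mulr_sumr; apply: eq_bigr => i _; rewrite mulr_sumr.
  have Hh : hX Yp + hX Ym - 2 * hX Xs <= - nu * t ^+ 2 * SD.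
    rewrite hE -HSD; apply: ler_sum => i _; apply: ler_sum => j _.
    rewrite Ype Yme; case: (eqVneq (D i j) 0) => [->|Dn].
      rewrite mulr0 addr0 subr0 (_ : (0:R) ^+ 2 = 0) ?mulr0; [lra | by rewrite expr2 mulr0].
    have [k1 k2 k3 k4] := key _ _ Dn.
    have := @conc R p (1 + eps) p0 p1 M0 (Xs i j + eps) (t * D i j).
    have -> : Xs i j + eps + t * D i j = Xs i j + t * D i j + eps by ring.
    have -> : Xs i j + eps - t * D i j = Xs i j - t * D i j + eps by ring.
    rewrite -/nu exprMn mulrA.
    move=> H; apply: H; lra.
  have T0 : 0 < t ^+ 2 * SD by rewrite mulr_gt0 // exprn_gt0.
  have Z : 0 < (sigma * nu - nu_hi) * (t ^+ 2 * SD) by rewrite mulr_gt0 // subr_gt0.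
  have S1 : sigma * (hX Yp + hX Ym - 2 * hX Xs) <= sigma * (- nu * (t ^+ 2 * SD)).
    by rewrite ler_pM2l // mulrA.
  move: Z S1 M1 M2 Hp Hm.
  move: (hX Yp) (hX Ym) (hX Xs) (f Yp) (f Ym) (f Xs) => h1 h2 h3 f1 f2 f3.
  move: (frob_inner (gradf Xs) (t *: D)) (t ^+ 2 * SD) => g T.
  rewrite (_ : sigma * (- nu * T) = - (sigma * nu * T)); last by ring.
  move: (sigma * nu) => sn.
  lra.
split => // P /is_perm_mxP [s2 ->].
have [s1 E1] := is_perm_mxP _ Pperm.
have := Hmin _ (perm_ds R s2); rewrite /F_pen E1.
rewrite (perm_h (fun x => powR (x + eps) p) s1 s2); lra.
Qed.
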